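(* Let $F$ be a finite field of characteristic $3$. Let $k\ge 0$ be an integer, $m=3k+1$, and $t$ an integer with $t^3\equiv 1\pmod m$ and $\gcd(m,t-1)=1$. Let $G=T_{3m}=\langle x,y\mid x^m=y^3=1,\ y^{-1}xy=x^t\rangle$ (of order $3m$) and $FG$ its group algebra. Let $s\in FG$ be the sum of all elements of $G$ whose order is a power of $3$ (including the identity), and let $\mathrm{Anh}(s)=\{\alpha\in FG\mid \alpha s=s\alpha=0\}$. Then $\mathrm{Anh}(s)\subseteq J(FG)$.
   Context: $J(FG)$ denotes the Jacobson radical of $FG$. *)

(* Defs.v *)
From HB Require Import structures.
From mathcomp Require Import all_boot all_order all_algebra all_fingroup.
From mathcomp Require Import pgroup.
Set Implicit Arguments. Unset Strict Implicit. Unset Printing Implicit Defensive.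
Import GRing.Theory.
Local Open Scope ring_scope.
Local Open Scope group_scope.

Definition galg (F : fieldType) (gT : finGroupType) : Type := {ffun gT -> F}.

Section GAlg.
Variables (F : fieldType) (gT : finGroupType).
Local Notation A := (galg F gT).
HB.instance Definition _ := GRing.Zmodule.on A.

Definition galg_one : A := [ffun g => ((g == 1%g)%:R : F)].
Definition galg_mul (a b : A) : A :=
  [ffun g => (\sum_(h : gT) a h * b (h^-1 * g)%g)%R].

Lemma galg_mulA : associative galg_mul.
Proof.
move=> a b c; apply/ffunP=> g; rewrite /galg_mul !ffunE.
symmetry.
under eq_bigr => h _ do rewrite ffunE big_distrl /=.
rewrite exchange_big /=; apply: eq_bigr => k _.
rewrite ffunE big_distrr /= (reindex_inj (mulgI k)) /=.
by apply: eq_bigr => l _; rewrite mulKg invMg -mulgA mulrA.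
Qed.

Lemma galg_mul1 : left_id galg_one galg_mul.
Proof.
move=> b; apply/ffunP=> g; rewrite ffunE (bigD1 1%g) //= big1 ?ffunE.
  by rewrite eqxx mul1r invg1 mul1g addr0.
by move=> h /negbTE nh; rewrite ffunE nh mul0r.
Qed.

Lemma galg_mulr1 : right_id galg_one galg_mul.
Proof.
move=> a; apply/ffunP=> g; rewrite ffunE (bigD1 g) //= big1 ?ffunE.
  by rewrite mulVg eqxx mulr1 addr0.
move=> h nh; rewrite ffunE.
have -> : (h^-1 * g == 1)%g = false.
  by rewrite -(inj_eq (mulgI h)) mulKVg mulg1 eq_sym (negbTE nh).
by rewrite mulr0.
Qed.

Lemma galg_mulDl : left_distributive galg_mul +%R.
Proof.
move=> a b c; apply/ffunP=> g; rewrite !ffunE -big_split /=.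
by apply: eq_bigr => h _; rewrite ffunE mulrDl.
Qed.

Lemma galg_mulDr : right_distributive galg_mul +%R.
Proof.
move=> a b c; apply/ffunP=> g; rewrite !ffunE -big_split /=.
by apply: eq_bigr => h _; rewrite ffunE mulrDr.
Qed.

HB.instance Definition _ := GRing.Zmodule_isPzRing.Build A
  galg_mulA galg_mul1 galg_mulr1 galg_mulDl galg_mulDr.
End GAlg.

Lemma galg_mulE (F : fieldType) (gT : finGroupType) (a b : galg F gT) :
  (a * b)%R = galg_mul a b.
Proof. by []. Qed.

Definition galg_elt (F : fieldType) (gT : finGroupType) (g : gT) : galg F gT :=
  [ffun h => ((h == g)%:R : F)].

Definition sum_3elts (F : fieldType) (gT : finGroupType) : galg F gT :=
  (\sum_(g : gT | 3.-elt g) galg_elt F g)%R.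

Definition left_ideal (R : pzRingType) (I : R -> Prop) : Prop :=
  [/\ I 0%R, (forall a b, I a -> I b -> I (a - b)%R)
    & (forall r a, I a -> I (r * a)%R)].

Definition maximal_left_ideal (R : pzRingType) (I : R -> Prop) : Prop :=
  [/\ left_ideal I, ~ I 1%R
    & forall J : R -> Prop, left_ideal J -> ~ J 1%R ->
        (forall a, I a -> J a) -> forall a, J a -> I a].

Definition jacobson_radical (R : pzRingType) : R -> Prop :=
  fun a => forall I : R -> Prop, maximal_left_ideal I -> I a.

(* Main.v *)
Require Import Defs.
From HB Require Import structures.
From mathcomp Require Import all_boot all_order all_algebra all_fingroup.
From mathcomp Require Import pgroup cyclic ring zify.
From Stdlib Require Import Classical.
Import GRing.Theory.
Local Open Scope ring_scope.

Set Implicit Arguments. Unset Strict Implicit.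
Section Alg.
Variables (F : fieldType) (gT : finGroupType).
Local Notation A := (galg F gT).

Definition cst (c : F) : A := [ffun g => c * (g == 1%g)%:R].
Local Notation d := (@galg_elt F gT).

Lemma mulE (a b : A) h : (a * b) h = \sum_k a k * b (k^-1 * h)%g.
Proof. by rewrite galg_mulE ffunE. Qed.

Lemma oneE h : (1 : A) h = (h == 1%g)%:R.
Proof. by rewrite /= ffunE. Qed.

Lemma addE (a b : A) h : (a + b) h = a h + b h.
Proof. by rewrite ffunE. Qed.
Lemma oppE (a : A) h : (- a) h = - a h.
Proof. by rewrite ffunE. Qed.
Lemma subE (a b : A) h : (a - b) h = a h - b h.
Proof. by rewrite !ffunE. Qed.
Lemma zeroE h : (0 : A) h = 0.
Proof. by rewrite ffunE. Qed.

Lemma cstM c (a : A) : cst c * a = [ffun h => c * a h].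
Proof.
apply/ffunP=> h; rewrite mulE ffunE (bigD1 1%g) //= big1 ?ffunE.
  by rewrite eqxx mulr1 invg1 mul1g addr0.
by move=> k /negbTE nk; rewrite ffunE nk mulr0 mul0r.
Qed.

Lemma mulcst (a : A) c : a * cst c = [ffun h => a h * c].
Proof.
apply/ffunP=> h; rewrite mulE ffunE (bigD1 h) //= big1 ?ffunE.
  by rewrite mulVg eqxx mulr1 addr0.
move=> k nk; rewrite ffunE.
have -> : (k^-1 * h == 1)%g = false.
  by rewrite -(inj_eq (mulgI k)) mulKVg mulg1 eq_sym (negbTE nk).
by rewrite mulr0 mulr0.
Qed.

Lemma cst_comm c (a : A) : GRing.comm (cst c) a.
Proof. by rewrite /GRing.comm cstM mulcst; apply/ffunP=> h; rewrite !ffunE mulrC. Qed.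

Lemma dM g (a : A) h : (d g * a) h = a (g^-1 * h)%g.
Proof.
rewrite mulE (bigD1 g) //= big1 ?ffunE ?eqxx ?mul1r ?addr0 //.
by move=> k /negbTE nk; rewrite ffunE nk mul0r.
Qed.

Lemma Md (a : A) g h : (a * d g) h = a (h * g^-1)%g.
Proof.
rewrite mulE (bigD1 (h * g^-1)%g) //= big1 ?ffunE.
  by rewrite invMg invgK mulgKV eqxx mulr1 addr0.
move=> k nk; rewrite ffunE.
have -> : (k^-1 * h == g)%g = false.
  apply/negbTE; apply: contra nk => /eqP <-.
  by rewrite invMg invgK mulgA mulgV mul1g.
by rewrite mulr0.
Qed.

Lemma dd g g' : d g * d g' = d (g * g')%g.
Proof.
apply/ffunP=> h; rewrite dM !ffunE.
by rewrite -(inj_eq (mulgI g)) mulKVg eq_sym.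
Qed.

Lemma d1 : d 1%g = 1.
Proof. by []. Qed.

Lemma dX g n : d (g ^+ n)%g = d g ^+ n.
Proof.
elim: n => [|n IH]; first by rewrite expg0 d1.
by rewrite expgS exprS -dd IH.
Qed.

Lemma decomp (a : A) : a = \sum_g cst (a g) * d g.
Proof.
apply/ffunP=> h; rewrite sum_ffunE (bigD1 h) //= big1 ?cstM ?ffunE ?eqxx ?mulr1 ?addr0 //.
by move=> k nk; rewrite cstM !ffunE eq_sym (negbTE nk) mulr0.
Qed.

Lemma cst_sum (I : finType) (f : I -> F) : \sum_i cst (f i) = cst (\sum_i f i).
Proof.
apply/ffunP=> h; rewrite sum_ffunE ffunE mulr_suml.
by apply: eq_bigr => i _; rewrite ffunE.
Qed.

Lemma cst0 : cst 0 = 0.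
Proof. by apply/ffunP=> h; rewrite !ffunE mul0r. Qed.

End Alg.
Arguments cst {F gT}.

Section Core.
Variables (F : fieldType) (gT : finGroupType) (x y : gT).
Local Notation A := (galg F gT).
Local Notation d := (@galg_elt F gT).
Local Notation N := (<[x]>%g).
Hypothesis Hnorm : y \in 'N(N)%g.
Hypothesis Hdec : forall g : gT, exists i, exists2 n, n \in N & g = (y ^+ i * n)%g.
Hypothesis Hy3 : (y ^+ 3 = 1)%g.
Hypothesis HN1 : (#|N|%:R : F) = 1.
Hypothesis H3 : (3%:R : F) = 0.
Hypothesis Hs : forall h : gT, (3.-elt h)%g = (h == 1%g) || (h \notin N).

Definition e : A := [ffun h => (h \in N)%:R].
Definition gh : A := [ffun _ => 1].

Lemma s_eq : sum_3elts F gT = 1 + gh - e.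
Proof.
apply/ffunP=> h; rewrite subE addE oneE !ffunE /sum_3elts sum_ffunE.
rewrite big_mkcond (bigD1 h) //= big1 => [|k nk]; last first.
  by rewrite ffunE eq_sym (negbTE nk); case: ifP.
rewrite ffunE eqxx addr0 Hs.
case: (eqVneq h 1%g) => [->|nh1] /=; first by rewrite group1 /= addrK.
rewrite add0r; case Nh: (h \in N); rewrite /= ?subrr ?subr0 //.
Qed.

Lemma mul_gh (a : A) : a * gh = [ffun _ => \sum_k a k].
Proof. by apply/ffunP=> h; rewrite mulE ffunE; apply: eq_bigr => k _; rewrite ffunE mulr1. Qed.

Lemma sum_ind (P : {pred gT}) :
  \sum_k (k \in P)%:R = (#|P|%:R : F).
Proof.
rewrite (eq_bigr (fun k => if k \in P then 1 else 0)) => [|k _]; last by case: (k \in P).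
by rewrite -big_mkcond sumr_const.
Qed.

Lemma gh_e : gh * e = gh.
Proof.
apply/ffunP=> h; rewrite mulE ffunE.
rewrite (reindex_inj (inj_comp (mulgI h) (@invg_inj gT))) /=.
under eq_bigr => k _ do rewrite !ffunE invMg invgK mulgKV mul1r.
by rewrite sum_ind HN1.
Qed.

Lemma e_e : e * e = e.
Proof.
apply/ffunP=> h; rewrite mulE ffunE.
case Nh: (h \in N).
  under eq_bigr => k _ do rewrite !ffunE (groupMr _ (Nh : h \in N)) groupV -natrM mulnb andbb.
  by rewrite sum_ind HN1.
rewrite big1 // => k _; rewrite !ffunE.
case Nk: (k \in N); last by rewrite mul0r.
by rewrite groupMl ?groupV // Nh mulr0.
Qed.


Lemma eps0 (b : A) : b * sum_3elts F gT = 0 -> (\sum_k b k = 0) /\ b = b * e.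
Proof.
rewrite s_eq mulrBr mulrDr mulr1 => H.
have H2 : b * gh = 0.
  have := congr1 (fun z => z * e) H.
  by rewrite !mulrBl !mulrDl mul0r -!mulrA e_e gh_e addrAC subrr add0r.
split.
  by have := congr1 (fun z : A => z 1%g) H2; rewrite mul_gh !ffunE.
by move: H; rewrite H2 addr0 => /eqP; rewrite subr_eq0 => /eqP.
Qed.

Definition idx g : nat := if g \in N then 0 else if (y^-1 * g \in N)%g then 1 else 2.

Lemma idxP g : exists2 n, n \in N & g = (y ^+ idx g * n)%g.
Proof.
rewrite /idx; case: ifP => [gN|gN]; first by exists g; rewrite ?expg0 ?mul1g.
case: ifP => [yg|yg]; first by exists (y^-1 * g)%g; rewrite // expg1 mulKVg.
exists ((y ^+ 2)^-1 * g)%g; last by rewrite mulKVg.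
have [i [n Nn gE]] := Hdec g.
rewrite gE -(expg_mod i Hy3) in gN yg *.
have : (i %% 3 < 3)%N by rewrite ltn_mod.
move: gN yg; case: (i %% 3)%N => [|[|[|j]]] //.
- by rewrite expg0 mul1g Nn.
- by rewrite expg1 mulKg Nn.
- by rewrite mulKg.
Qed.

Lemma de g : d g * e = d (y ^+ idx g)%g * e.
Proof.
apply/ffunP => h; rewrite !dM !ffunE.
have [n Nn {1}->] := idxP g.
by rewrite invMg -mulgA groupMl // groupV.
Qed.

Lemma three0 : (3%:R : A) = 0.
Proof.
apply/ffunP=> h; rewrite ffunMnE oneE zeroE.
by rewrite -(mulr_natr ((h == 1%g)%:R : F) 3) H3 mulr0.
Qed.

Lemma Ye : GRing.comm (d y) e.
Proof.
rewrite /GRing.comm; apply/ffunP => h; rewrite dM Md !ffunE.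
by rewrite -(memJ_norm (h * y^-1)%g Hnorm) conjgE mulgKV.
Qed.

Lemma u3 : (d y - 1) ^+ 3 = 0.
Proof.
have Y3 : d y *+ 3 = 0 by rewrite -(mulr_natr (d y) 3) three0 mulr0.
have Y2 : d y *+ 2 = - d y.
  by apply/eqP; rewrite -addr_eq0 -mulrSr Y3.
rewrite exprS sqrrB1 Y2 opprK.
have -> : d y ^+ 2 + d y + 1 = \sum_(i < 3) d y ^+ i.
  by rewrite !big_ord_recl big_ord0 /= expr0 expr1 addr0 addrC [d y + _]addrC addrA.
by rewrite -subrX1 -dX Hy3 d1 subrr.
Qed.

Lemma cube0 (b : A) : b * sum_3elts F gT = 0 -> b ^+ 3 = 0.
Proof.
move/eps0 => [Hsum Hbe].
set Y := d y. set u := Y - 1.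
pose q := \sum_g cst (b g) * \sum_(j < idx g) Y ^+ j.
have cuY : forall n, GRing.comm u (Y ^+ n).
  move=> n; apply/esym; apply: commrB; last exact: commr1.
  by apply/esym; apply: commrX; exact: commr_refl.
have cue : GRing.comm u e.
  by apply/esym; apply: commrB; [apply/esym; apply: Ye | apply: commr1].
have cuq : GRing.comm u q.
  apply: commr_sum => g _; apply: commrM; first by apply/esym/cst_comm.
  by apply: commr_sum => j _.
have cqe : GRing.comm q e.
  apply/esym; apply: commr_sum => g _; apply: commrM; first by apply/esym/cst_comm.
  by apply: commr_sum => j _; apply: commrX; apply/esym; apply: Ye.
have Hb : b = u * q * e.
  rewrite Hbe {1}(decomp b) mulr_suml.
  under eq_bigr => g _ do rewrite -mulrA de dX -/Y -[Y ^+ _](subrK 1) mulrDl mul1r mulrDr.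
  rewrite big_split /= -mulr_suml cst_sum Hsum cst0 mul0r addr0.
  rewrite /q mulr_sumr mulr_suml; apply: eq_bigr => g _.
  by rewrite subrX1 -/u !mulrA (cst_comm _ u).
rewrite Hb exprMn_comm; last by apply/esym; apply: commrM; apply/esym.
by rewrite exprMn_comm // u3 !mul0r.
Qed.

End Core.

Lemma cube1 (gT : finGroupType) (x y : gT) (a m j : nat) :
  (x ^+ m = 1)%g -> (y ^+ 3 = 1)%g -> (x ^ y = x ^+ a)%g -> (m %| a * a + a + 1)%N ->
  ((y * x ^+ j) ^+ 3 = 1)%g.
Proof.
move=> Hxm Hy3 Hxy Hd.
set n := (x ^+ j)%g.
have c1 : (n ^ y = x ^+ (j * a))%g by rewrite /n conjXg Hxy -expgM mulnC.
have c2 : ((n ^ y) ^ y = x ^+ (j * a * a))%g by rewrite c1 conjXg Hxy -expgM [(a * _)%N]mulnC.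
have E : ((y * n) ^+ 3 = y ^+ 3 * (((n ^ y) ^ y) * (n ^ y) * n))%g.
  have -> : ((y * n) ^+ 3 = y * (n * y) * (n * y) * n)%g.
    by rewrite !expgS expg0 mulg1 !mulgA.
  rewrite (conjgC n y); set c := (n ^ y)%g.
  have -> : (y * (y * c) * (y * c) * n = y * y * (c * y) * c * n)%g by rewrite !mulgA.
  rewrite (conjgC c y).
  by rewrite !expgS expg0 mulg1 !mulgA.
rewrite E Hy3 mul1g c2 c1 -!expgD.
apply/eqP; rewrite -order_dvdn.
apply: (dvdn_trans (n := m)); first by rewrite order_dvdn Hxm.
rewrite (_ : (j * a * a + j * a + j = j * (a * a + a + 1))%N); first exact: dvdn_mull.
by rewrite !mulnDr muln1 mulnA.
Qed.

Lemma jac_nil (R : pzRingType) (a : R) :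
  (forall r : R, (r * a) ^+ 3 = 0) -> jacobson_radical a.
Proof.
move=> Hn I [[I0 IB IM] nI1 Imax].
apply: NNPP => nIa.
pose J := fun b : R => exists i r, I i /\ b = i + r * a.
have LJ : left_ideal J.
  split.
  - by exists 0, 0; rewrite mul0r addr0.
  - move=> b c [i1 [r1 [Ii1 ->]]] [i2 [r2 [Ii2 ->]]].
    exists (i1 - i2), (r1 - r2); split; first exact: IB.
    by rewrite mulrBl opprD addrACA.
  - move=> r b [i [r' [Ii ->]]].
    exists (r * i), (r * r'); split; first exact: IM.
    by rewrite mulrDr mulrA.
have J1 : J 1.
  apply: NNPP => nJ1; apply: nIa.
  apply: (Imax J LJ nJ1); last by exists 0, 1; rewrite mul1r add0r.
  by move=> b Ib; exists b, 0; rewrite mul0r addr0.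
case: J1 => i [r [Ii E]].
have Ei : i = 1 - r * a by rewrite E addrK.
apply: nI1.
have -> : (1 : R) = (1 + r * a + (r * a) ^+ 2) * i.
  rewrite Ei mulrBr mulr1 !mulrDl mul1r -expr2 -exprSr Hn.
  by rewrite addr0 -[1 + _ + _]addrA addrK.
exact: IM.
Qed.

Theorem proposition3p4
  (F : finFieldType) (k : nat) (t : int) (gT : finGroupType) (x y : gT) :
  3%N \in [pchar F] ->
  ((3 * k).+1%:Z %| t ^+ 3 - 1)%Z ->
  coprimez (3 * k).+1%:Z (t - 1) ->
  <<[set x; y]>>%g = [set: gT] ->
  (x ^+ (3 * k).+1)%g = 1%g ->
  (y ^+ 3)%g = 1%g ->
  (x ^ y)%g = (x ^+ `|(t %% (3 * k).+1%:Z)%Z|%N)%g ->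
  #|gT| = (3 * (3 * k).+1)%N ->
  forall alpha : galg F gT,
    alpha * sum_3elts F gT = 0 -> sum_3elts F gT * alpha = 0 ->
    jacobson_radical alpha.
Proof.
move=> Hch Hdiv Hcop Hgen Hxm Hy3 Hxy HG alpha Has _.
set m := (3 * k).+1 in Hdiv Hcop Hxm Hxy HG.
set a := `|(t %% m%:Z)%Z|%N in Hxy.
have H3 : (3%:R : F) = 0 by apply: pcharf0.
have Ndiv : (m %| a * a + a + 1)%N.
  have mz : (m%:Z != 0) by [].
  have h1 : (m%:Z %| t ^+ 2 + t + 1)%Z.
    rewrite -(Gauss_dvdzr _ Hcop).
    by rewrite (_ : (t - 1) * _ = t ^+ 3 - 1) //; ring.
  have HA : (a%:Z = (t %% m%:Z)%Z) by rewrite /a gez0_abs // modz_ge0.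
  set q := (t %/ m%:Z)%Z.
  have Ht := divz_eq t m%:Z; rewrite -/q -HA in Ht.
  have : (m%:Z %| (a * a + a + 1)%N%:Z)%Z.
    rewrite !PoszD !PoszM.
    have -> : (a%:Z * a%:Z + a%:Z + 1%N%:Z = (t ^+ 2 + t + 1) + m%:Z * (q * q * m%:Z - 2 * q * t - q))%R.
      have -> : (a%:Z = t - q * m%:Z)%R by rewrite Ht [q * _ + _]addrC addrK.
      by rewrite /=; ring.
    by rewrite rpredD // dvdz_mulr.
  by rewrite dvdzE.
have Hnorm : y \in 'N(<[x]>)%g.
  by rewrite inE -cycleJ cycle_subG Hxy mem_cycle.
have HyN : (<[y]> \subset 'N(<[x]>))%g by rewrite cycle_subG.
have Hjoin := norm_joinEl HyN.
have HT : ([set: gT] \subset <[y]> * <[x]>)%g.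
  rewrite -Hgen -Hjoin gen_subG.
  apply/subsetP => z; rewrite !inE => /orP[]/eqP->.
  - by apply: (subsetP (joing_subr _ _)); apply: cycle_id.
  - by apply: (subsetP (joing_subl _ _)); apply: cycle_id.
have Hdec : forall g : gT, exists i, exists2 n, n \in <[x]>%g & g = (y ^+ i * n)%g.
  move=> g; have := subsetP HT g (in_setT g).
  case/mulsgP => y' n Hy' Hn ->; case/cycleP: Hy' => i ->.
  by exists i, n.
have HN : #|<[x]>%g| = m.
  have := mul_cardG <[y]>%G <[x]>%G.
  have -> : (<[y]> * <[x]>)%g = [set: gT] by apply/eqP; rewrite eqEsubset HT subsetT.
  rewrite cardsT HG.
  have hy : (#|<[y]>%g| <= 3)%N by apply: dvdn_leq => //; rewrite order_dvdn Hy3.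
  have hx : (#|<[x]>%g| <= m)%N by apply: dvdn_leq => //; rewrite order_dvdn Hxm.
  have hc := cardG_gt0 (<[y]> :&: <[x]>)%G.
  move: hy hx hc; set u := #|_|; set v := #|_|; set w := #|_|.
  move=> hy hx hc E; nia.
have HN1 : (#|<[x]>%g|%:R : F) = 1.
  by rewrite HN /m -addn1 natrD natrM H3 mul0r add0r.
have elt3 : forall g : gT, (g ^+ 3 = 1)%g -> (3.-elt g)%g.
  by move=> g Hg; apply: (pnat_dvd _ (pnat_id _)); rewrite ?order_dvdn ?Hg.
have Hs : forall h : gT, (3.-elt h)%g = (h == 1%g) || (h \notin <[x]>%g).
  move=> h; case: (eqVneq h 1%g) => [->|nh1] /=; first by rewrite p_elt1.
  case Nh: (h \in <[x]>%g) => /=.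
  - apply/negP => H3h.
    have dh : (#[h]%g %| m)%N.
      have sub : (<[h]> \subset <[x]>)%g by rewrite cycle_subG.
      apply: dvdn_trans (cardSg sub) _.
      by rewrite order_dvdn Hxm.
    have : ((3%N)^').-nat #[h]%g.
      rewrite p'natE //; apply/negP => d3.
      by move: (dvdn_trans d3 dh) => /dvdnP [c]; rewrite /m; lia.
    by move/(pnat_1 H3h)/eqP; rewrite order_eq1 (negbTE nh1).
  - have [i [n Nn hE]] := Hdec h.
    rewrite hE -(expg_mod i Hy3) in Nh *.
    have : (i %% 3 < 3)%N by rewrite ltn_mod.
    move: Nh; case: (i %% 3)%N => [|[|[|j]]] // Nh _.
    + by rewrite expg0 mul1g Nn in Nh.
    + rewrite expg1; apply: elt3.
      case/cycleP: Nn => j ->; exact: cube1 Hxm Hy3 Hxy Ndiv.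
    + rewrite -p_eltV invMg.
      have -> : ((y ^+ 2)^-1 = y)%g.
        by apply/esym; rewrite -[LHS](mulKg (y ^+ 2)%g) -expgSr Hy3 mulg1.
      rewrite conjgC; apply: elt3.
      have : ((n^-1) ^ y \in <[x]>)%g by rewrite memJ_norm // groupV.
      case/cycleP => j ->; exact: cube1 Hxm Hy3 Hxy Ndiv.
apply: jac_nil => r.
apply: (@cube0 F gT x y Hnorm Hdec Hy3 HN1 H3 Hs).
by rewrite -mulrA Has mulr0.
Qed.
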